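(* For every $k\ge 3$, $\left\lceil \binom{2k}{2}_2 \big/ \binom{k}{2}_2\right\rceil = 2^{2k}+3\cdot 2^k+5$, and $$\lim_{k\to\infty}\frac{\mathcal{C}_2(2k,k,2)}{\left\lceil \binom{2k}{2}_2 / \binom{k}{2}_2\right\rceil}=1.$$
   Context: $\binom{n}{k}_q=\frac{(q^n-1)(q^{n-1}-1)\cdots(q^{n-k+1}-1)}{(q^k-1)(q^{k-1}-1)\cdots(q-1)}$ is the Gaussian coefficient (number of $k$-dimensional subspaces of $\mathbb{F}_q^n$). $\mathcal{C}_q(n,k,r)$ is the minimum number of $k$-dimensional subspaces of $\mathbb{F}_q^n$ such that every $r$-dimensional subspace of $\mathbb{F}_q^n$ is contained in at least one of them. *)

(* Defs.v *)
From HB Require Import structures.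
From mathcomp Require Import all_boot all_order all_algebra all_field.
Set Implicit Arguments. Unset Strict Implicit. Unset Printing Implicit Defensive.
Import Order.TTheory GRing.Theory Num.Theory.

Local Open Scope ring_scope.

Definition gauss (q n k : nat) : rat :=
  (\prod_(i < k) ((q ^ (n - i))%N%:R - 1)) / (\prod_(i < k) ((q ^ (k - i))%N%:R - 1)).

(* Subspaces of F^n are represented canonically by n x n matrices A with
   <<A>> = A (the canonical generator of their row space); the row space of A
   is the subspace. *)
Definition is_subspace (F : fieldType) (n d : nat) (A : 'M[F]_n) : bool :=
  ((<<A>>%MS == A) && (\rank A == d))%N.

Definition is_covering (F : finFieldType) (n k r : nat) (S : {set 'M[F]_n}) : bool :=
  [forall A in S, is_subspace k A] &&
  [forall W : 'M[F]_n, is_subspace r W ==> [exists A in S, (W <= A)%MS]].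

(* C_F(n,k,r): minimum size of a covering (default value #|{set 'M_n}| if no
   covering exists, which never happens for r <= k <= n). *)
Definition covering_number (F : finFieldType) (n k r : nat) : nat :=
  \big[minn/#|{: {set 'M[F]_n}}|]_(S : {set 'M[F]_n} | is_covering k r S) #|S|.

(* Main.v *)
Require Import Defs.
From HB Require Import structures.
From mathcomp Require Import all_boot all_order all_algebra all_field.
From mathcomp Require Import ring lra zify.
Import Order.TTheory GRing.Theory Num.Theory.
Import VectorInternalTheory.
Set Implicit Arguments. Unset Strict Implicit.
Local Open Scope ring_scope.

Section Graph.
Variable (F : finFieldType) (H : (2%N \in [pchar F])%R).
Let V := pPrimeCharType H.
Let m := dim V.

Definition hh (a b : V) (x : 'rV['F_2]_m) : 'rV['F_2]_m :=
  @v2r _ V (a * @r2v _ V x + b * (@r2v _ V x) ^+ 2).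

Lemma F2_sq (c : 'F_2) : c ^+ 2 = c.
Proof. by case: c => [[|[|]]] //= i; apply/val_inj. Qed.

Lemma hhD a b : {morph hh a b : x y / x + y}.
Proof.
move=> x y; rewrite /hh -(linearD (@v2r _ V)) /= (linearD (@r2v _ V)) /=; apply: f_equal.
have sq : forall u v : V, (u + v) ^+ 2 = u ^+ 2 + v ^+ 2.
  by move=> u v; rewrite sqrrD -mulr_natl (pcharf0 H) mul0r addr0.
by rewrite sq; ring.
Qed.

Lemma hhZ a b (c : 'F_2) x : hh a b (c *: x) = c *: hh a b x.
Proof.
rewrite /hh linearZ /=; set r := @r2v _ V x.
have -> : a * (c *: r) + b * (c *: r) ^+ 2 = c *: (a * r + b * r ^+ 2).
  by rewrite exprZn F2_sq scalerDr -!scalerAr.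
by rewrite linearZ.
Qed.

Definition Mab (a b : V) : 'M['F_2]_m := \matrix_(i < m) hh a b (delta_mx 0 i).

Lemma hh0 a b : hh a b 0 = 0.
Proof. by rewrite /hh linear0 mulr0 expr0n /= mulr0 addr0 linear0. Qed.

Lemma hh_mx a b (x : 'rV['F_2]_m) : x *m Mab a b = hh a b x.
Proof.
rewrite mulmx_sum_row {2}(row_sum_delta x).
rewrite (big_morph (hh a b) (hhD a b) (hh0 a b)).
by apply: eq_bigr => i _; rewrite rowK hhZ.
Qed.

Lemma cardV : #|V| = (2 ^ m)%N.
Proof.
rewrite /m -dimvf (pprimeChar_dimf H).
exact: (card_pprimeChar H).
Qed.

Lemma graph_cover (x1 x2 y1 y2 : 'rV['F_2]_m) : x1 != 0 -> x2 != 0 -> x1 != x2 ->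
  exists p : V * V, x1 *m Mab p.1 p.2 = y1 /\ x2 *m Mab p.1 p.2 = y2.
Proof.
move=> nz1 nz2 ne12.
pose T (p : V * V) := (hh p.1 p.2 x1, hh p.1 p.2 x2).
have r2v0 : forall x, x != 0 -> @r2v _ V x != 0.
  move=> x; apply: contra => /eqP e; apply/eqP; apply: (@r2v_inj _ V).
  by rewrite e linear0.
have Tinj : injective T.
  move=> [a b] [a' b'] [/(@v2r_inj _ V) e1 /(@v2r_inj _ V) e2] /=.
  set r1 := @r2v _ V x1 in e1; set r2 := @r2v _ V x2 in e2.
  have n1 : r1 != 0 by apply: r2v0.
  have n2 : r2 != 0 by apply: r2v0.
  have n12 : r1 - r2 != 0.
    rewrite subr_eq0; apply: contra ne12 => /eqP e; apply/eqP.
    exact: (@r2v_inj _ V).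
  have E1 : r1 * ((a - a') + (b - b') * r1) = 0.
    have -> : r1 * ((a - a') + (b - b') * r1)
      = (a * r1 + b * r1 ^+ 2) - (a' * r1 + b' * r1 ^+ 2) by ring.
    by rewrite e1 subrr.
  have E2 : r2 * ((a - a') + (b - b') * r2) = 0.
    have -> : r2 * ((a - a') + (b - b') * r2)
      = (a * r2 + b * r2 ^+ 2) - (a' * r2 + b' * r2 ^+ 2) by ring.
    by rewrite e2 subrr.
  move/eqP: E1; rewrite mulf_eq0 (negbTE n1) /= => /eqP E1.
  move/eqP: E2; rewrite mulf_eq0 (negbTE n2) /= => /eqP E2.
  have E3 : (b - b') * (r1 - r2) = 0.
    have -> : (b - b') * (r1 - r2) = ((a - a') + (b - b') * r1) - ((a - a') + (b - b') * r2) by ring.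
    by rewrite E1 E2 subrr.
  move/eqP: E3; rewrite mulf_eq0 (negbTE n12) orbF subr_eq0 => /eqP eb.
  rewrite eb subrr mul0r addr0 in E1.
  by move/eqP: E1; rewrite subr_eq0 => /eqP ->; rewrite eb.
have Hc : (#|{: 'rV['F_2]_m * 'rV['F_2]_m}| <= #|{: V * V}|)%N.
  by rewrite !card_prod !card_mx cardV card_Fp // mul1n.
have := inj_card_onto Tinj Hc (y1, y2).
case/codomP => p Hp.
exists p; move: Hp; rewrite /T => -[-> ->].
by rewrite !hh_mx.
Qed.
End Graph.

Lemma graph_family k : exists GM : {set 'M['F_2]_k}, (#|GM| <= 2 ^ (2 * k))%N /\
  forall x1 x2 y1 y2 : 'rV['F_2]_k, x1 != 0 -> x2 != 0 -> x1 != x2 ->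
    exists2 M, M \in GM & (x1 *m M = y1 /\ x2 *m M = y2).
Proof.
case: (posnP k) => [-> | k_gt0].
  exists set0; split; first by rewrite cards0.
  by move=> x1 x2 y1 y2; rewrite [x1]thinmx0 eqxx.
have [Fm cF cardF] := pPrimePowerField (isT : prime 2) k_gt0.
have Hm : dim (pPrimeCharType cF) = k.
  apply/eqP; rewrite -(@eqn_exp2l 2) // -(@cardV Fm cF).
  by rewrite -cardF.
rewrite -Hm.
exists [set @Mab Fm cF p.1 p.2 | p : pPrimeCharType cF * pPrimeCharType cF]; split.
  apply: (leq_trans (leq_imset_card _ _)).
  by rewrite card_prod (@cardV Fm cF) mul2n -addnn expnD.
move=> x1 x2 y1 y2 n1 n2 n12.
have [p [e1 e2]] := @graph_cover Fm cF x1 x2 y1 y2 n1 n2 n12.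
by exists (@Mab Fm cF p.1 p.2); [apply: imset_f | split].
Qed.

Section Extra.
Variables (F : fieldType) (k : nat).

Definition extraN (u : 'rV[F]_k) (phi : 'cV[F]_k) (t : 'rV[F]_k) (c : F)
  : 'M[F]_(k, k + k) :=
  row_mx (phi *m u) (1%:M - phi *m t + c *: (phi *m t)).

Lemma extra_cover (u v w : 'rV[F]_k) phi t c :
  t *m phi = 1%:M -> w *m phi = 0 -> v *m phi = c%:M ->
  (row_mx u v <= extraN u phi t c)%MS /\ (row_mx 0 w <= extraN u phi t c)%MS.
Proof.
move=> tp wp vp; split.
  apply/submxP; exists (v + t - c *: t).
  have zp : (v + t - c *: t) *m phi = 1%:M.
    by rewrite mulmxBl mulmxDl vp tp -scalemxAl tp scalemx1 addrC addKr.
  rewrite /extraN mul_mx_row !mulmxA zp mul1mx mulmxDr mulmxBr mulmx1.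
  rewrite -!scalemxAr !mulmxA zp !mul1mx.
  by congr row_mx; rewrite addrAC subrK addrK.
apply/submxP; exists w.
by rewrite /extraN mul_mx_row !mulmxA wp !mul0mx mulmxDr mulmxBr mulmx1 -!scalemxAr !mulmxA wp !mul0mx scaler0 subr0 addr0.
Qed.
End Extra.

Lemma F2_cases (a : 'F_2) : a = 0 \/ a = 1.
Proof. by case: a => [[|[|]]] // i; [left | right]; apply/val_inj. Qed.

Section Func.
Variables (k : nat) (k2 : (1 < k)%N).
Let i0 : 'I_k := Ordinal (ltnW k2).
Let i1 : 'I_k := Ordinal k2.

Definition phiF (i : 'I_3) : 'cV['F_2]_k :=
  if (i == 0 :> nat) then delta_mx i0 0 else if (i == 1 :> nat) then delta_mx i1 0
  else delta_mx i0 0 + delta_mx i1 0.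
Definition tF (i : 'I_3) : 'rV['F_2]_k :=
  if (i == 1 :> nat) then delta_mx 0 i1 else delta_mx 0 i0.

Lemma mul_e (x : 'rV['F_2]_k) j : x *m delta_mx j 0 = (x 0 j)%:M.
Proof. by rewrite -colE; apply/matrixP => a b; rewrite !ord1 !mxE eqxx mulr1n. Qed.

Lemma tphi i : tF i *m phiF i = 1%:M.
Proof.
have ne : (i0 == i1) = false by [].
rewrite /tF /phiF; case: i => [[|[|[|]]]] //= _; rewrite ?mulmxDr !mul_e !mxE ?eqxx //=.
by rewrite -[0%:M]scalemx1 scale0r addr0.
Qed.

Lemma phi_cover (w : 'rV['F_2]_k) : exists i, w *m phiF i = 0.
Proof.
case: (F2_cases (w 0 i0)) => h0.
  by exists 0; rewrite /phiF /= mul_e h0 -scalemx1 scale0r.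
case: (F2_cases (w 0 i1)) => h1.
  by exists 1; rewrite /phiF /= mul_e h1 -scalemx1 scale0r.
exists 2; rewrite /phiF /= mulmxDr !mul_e h0 h1 -scalemx1 -scalerDl.
have -> : (1 + 1 : 'F_2) = 0 by apply/val_inj.
by rewrite scale0r.
Qed.
End Func.

Section Cover.
Variables (k : nat) (k2 : (1 < k)%N) (GM : {set 'M['F_2]_k}).
Hypothesis HGM : forall x1 x2 y1 y2 : 'rV['F_2]_k, x1 != 0 -> x2 != 0 -> x1 != x2 ->
    exists2 M, M \in GM & (x1 *m M = y1 /\ x2 *m M = y2).

Definition Fam1 : {set 'M['F_2]_(k + k)} := [set <<row_mx 1%:M M>>%MS | M in GM].
Definition Fam2 : {set 'M['F_2]_(k + k)} :=
  [set <<extraN p.1.1 (phiF k2 p.1.2) (tF k2 p.1.2) p.2>>%MS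
     | p : 'rV['F_2]_k * 'I_3 * 'F_2].

Lemma extra_in (u v w : 'rV['F_2]_k) : exists2 A, A \in Fam2 &
  (row_mx u v <= A)%MS && (row_mx 0 w <= A)%MS.
Proof.
have [i wi] := phi_cover k2 w.
pose c := (v *m phiF k2 i) 0 0.
have [h1 h2] := @extra_cover _ _ u v w (phiF k2 i) (tF k2 i) c (tphi k2 i) wi (mx11_scalar _).
exists <<extraN u (phiF k2 i) (tF k2 i) c>>%MS.
  by apply/imsetP; exists ((u, i), c).
by rewrite !genmxE h1 h2.
Qed.

Lemma pair_cover (w1 w2 : 'rV['F_2]_(k + k)) : exists2 A, A \in Fam1 :|: Fam2 &
  (w1 <= A)%MS && (w2 <= A)%MS.
Proof.
rewrite -(hsubmxK w1) -(hsubmxK w2).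
move: (lsubmx w1) (rsubmx w1) (lsubmx w2) (rsubmx w2) => x1 y1 x2 y2.
have inr A : A \in Fam2 -> A \in Fam1 :|: Fam2 by rewrite inE orbC => ->.
case: (eqVneq x1 0) => [-> | n1].
  have [A HA /andP [h1 h2]] := extra_in x2 y2 y1.
  by exists A; [apply: inr | rewrite h1 h2].
case: (eqVneq x2 0) => [-> | n2].
  have [A HA /andP [h1 h2]] := extra_in x1 y1 y2.
  by exists A; [apply: inr | rewrite h1 h2].
case: (eqVneq x1 x2) => [<- | n12].
  have [A HA /andP [h1 h2]] := extra_in x1 y1 (y2 - y1).
  exists A; first by apply: inr.
  rewrite h1 /=.
  have -> : row_mx x1 y2 = row_mx x1 y1 + row_mx 0 (y2 - y1).
    by rewrite add_row_mx addr0 addrC subrK.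
  exact: addmx_sub.
have [M HM [e1 e2]] := HGM y1 y2 n1 n2 n12.
exists <<row_mx 1%:M M>>%MS.
  by rewrite inE; apply/orP; left; apply/imsetP; exists M.
rewrite !genmxE -e1 -e2.
have sub x : (row_mx x (x *m M) <= row_mx 1%:M M)%MS.
  by rewrite -{1}(mulmx1 x) -mul_mx_row submxMl.
by rewrite !sub.
Qed.
End Cover.

Lemma ext_exists (F : finFieldType) n k (A : 'M[F]_n) : (\rank A <= k)%N -> (k <= n)%N ->
  exists B : 'M[F]_n, (A <= B)%MS && is_subspace k B.
Proof.
move=> hA hk.
move Hd: (k - \rank A)%N => d; elim: d A hA Hd => [|d IH] A hA Hd.
  exists <<A>>%MS; rewrite genmxE submx_refl /is_subspace genmx_id eqxx mxrank_gen /=.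
  apply/eqP; lia.
case: (boolP [exists v : 'rV[F]_n, ~~ (v <= A)%MS]) => [/existsP [v hv] | /existsPn H].
  have r1 : (\rank A < \rank (A + v)%MS)%N.
    apply: rank_ltmx; rewrite ltmxE addsmxSl /= addsmx_sub negb_and hv orbT //.
  have r2 : (\rank (A + v)%MS <= \rank A + 1)%N.
    case: (mxrank_adds_leqif A v) => le _.
    apply: (leq_trans le); rewrite leq_add2l rank_rV; by case: (v != 0).
  have [B /andP [hB1 hB2]] := IH (A + v)%MS ltac:(lia) ltac:(lia).
  exists B; rewrite hB2 andbT; exact: submx_trans (addsmxSl A v) hB1.
have : (1%:M <= A)%MS.
  by apply/row_subP => i; have := H (row i 1%:M); rewrite negbK.
move/mxrankS; rewrite mxrank1 => hn; lia.
Qed.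

Lemma bigmin_le_nat (T : finType) (P : pred T) (f : T -> nat) d x :
  P x -> (\big[minn/d]_(y | P y) f y <= f x)%N.
Proof.
move=> Px; have : x \in index_enum T by rewrite mem_index_enum.
elim: (index_enum T) => [|y s IH] //; rewrite big_cons inE.
case/orP => [/eqP <- | hs]; first by rewrite Px geq_minl.
case: (P y); last exact: IH.
by rewrite geq_min IH // orbT.
Qed.

Lemma le_bigmin_nat (T : finType) (P : pred T) (f : T -> nat) d b :
  (b <= d)%N -> (forall y, P y -> b <= f y)%N -> (b <= \big[minn/d]_(y | P y) f y)%N.
Proof.
move=> hd hf; apply: (big_ind (fun x => b <= x)%N) => //.
by move=> x y hx hy; rewrite leq_min hx hy.
Qed.

Lemma cover_bound (F : finFieldType) n k (Fam : {set 'M[F]_n}) : (k <= n)%N ->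
  (forall A, A \in Fam -> \rank A <= k)%N ->
  (forall w1 w2 : 'rV[F]_n, exists2 A, A \in Fam & (w1 <= A)%MS && (w2 <= A)%MS) ->
  (covering_number F n k 2 <= #|Fam|)%N.
Proof.
move=> hk hr hc.
pose ext (A : 'M[F]_n) := odflt A [pick B | (A <= B)%MS && is_subspace k B].
have ext_spec A : A \in Fam -> (A <= ext A)%MS && is_subspace k (ext A).
  move=> hA; rewrite /ext; case: pickP => [B HB | H0] //=.
  have [B HB] := ext_exists (hr A hA) hk.
  by rewrite H0 in HB.
pose S := ext @: Fam.
have covS : is_covering k 2 S.
  apply/andP; split.
    apply/forall_inP => B /imsetP [A HA ->].
    by case/andP: (ext_spec A HA).
  apply/forallP => W; apply/implyP => /andP [_ /eqP HrW].
  have h0 : (0 < \rank W)%N by rewrite HrW.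
  have h1 : (1 < \rank W)%N by rewrite HrW.
  pose j0 : 'I_(\rank W) := Ordinal h0.
  pose j1 : 'I_(\rank W) := Ordinal h1.
  have [A HA /andP [a0 a1]] := hc (row j0 (row_base W)) (row j1 (row_base W)).
  have /andP [hAe _] := ext_spec A HA.
  apply/existsP; exists (ext A); rewrite imset_f //=.
  rewrite -(eq_row_base W); apply/row_subP => i.
  apply: submx_trans hAe.
  have : (i : nat) = j0 \/ (i : nat) = j1.
    by case: i => [[|[|?]]] /=; rewrite HrW //; auto.
  by case => /val_inj ->.
rewrite /covering_number.
apply: (leq_trans (bigmin_le_nat (fun S : {set _} => #|S|) _ covS)).
exact: leq_imset_card.
Qed.

Section Count.
Variable F : finFieldType.

Lemma card_subsp n m (A : 'M[F]_(m, n)) :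
  #|[set v : 'rV[F]_n | (v <= A)%MS]| = (#|F| ^ \rank A)%N.
Proof.
pose f (z : 'rV[F]_(\rank A)) := z *m row_base A.
have finj : injective f.
  have /row_freeP [B hB] := row_base_free A.
  apply: (can_inj (g := fun v => v *m B)) => z; by rewrite /f -mulmxA hB mulmx1.
have -> : [set v : 'rV[F]_n | (v <= A)%MS] = f @: setT.
  apply/setP => v; rewrite inE; apply/idP/imsetP.
    rewrite -(eq_row_base A) => /submxP [D ->]; by exists D.
  by move=> [z _ ->]; rewrite /f -(eq_row_base A) submxMl.
by rewrite card_imset // cardsT card_mx mul1n.
Qed.

Definition pairset n m (A : 'M[F]_(m, n)) :=
  [set p : 'rV[F]_n * 'rV[F]_n | ((p.1 <= A)%MS && (p.1 != 0)) &&
                                  ((p.2 <= A)%MS && ~~ (p.2 <= p.1)%MS)].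

Lemma card_pairset n m (A : 'M[F]_(m, n)) :
  #|pairset A| = ((#|F| ^ \rank A - 1) * (#|F| ^ \rank A - #|F|))%N.
Proof.
rewrite /pairset -sum1dep_card.
rewrite -(pair_big_dep (fun u => (u <= A)%MS && (u != 0))
   (fun u v => (v <= A)%MS && ~~ (v <= u)%MS) (fun _ _ => 1%N)) /=.
rewrite (eq_bigr (fun _ => (#|F| ^ \rank A - #|F|)%N)); last first.
  move=> u /andP [uA nu].
  rewrite sum1dep_card.
  have -> : [set v | (v <= A)%MS && ~~ (v <= u)%MS] =
            [set v : 'rV[F]_n | (v <= A)%MS] :\: [set v | (v <= u)%MS].
    by apply/setP => v; rewrite !inE andbC.
  rewrite cardsD (setIidPr _); last first.
    by apply/subsetP => v; rewrite !inE => /submx_trans; apply.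
  by rewrite !card_subsp rank_rV nu expn1.
rewrite sum_nat_cond_const; congr (_ * _)%N.
have -> : [set u | (u <= A)%MS && (u != 0)] = [set v : 'rV[F]_n | (v <= A)%MS] :\ 0.
  by apply/setP => v; rewrite !inE andbC.
have := cardsD1 0 [set v : 'rV[F]_n | (v <= A)%MS].
rewrite inE sub0mx card_subsp => ->; by rewrite /= add1n subn1.
Qed.
End Count.

Lemma cover_lower (F : finFieldType) n k (S : {set 'M[F]_n}) : is_covering k 2 S ->
  (((#|F| ^ n - 1) * (#|F| ^ n - #|F|)) <=
     #|S| * ((#|F| ^ k - 1) * (#|F| ^ k - #|F|)))%N.
Proof.
case/andP => /forall_inP hS /forallP hC.
have := card_pairset (1%:M : 'M[F]_n); rewrite mxrank1 => <-.
set P := pairset (1%:M : 'M[F]_n).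
have step1 : forall p, p \in P -> exists2 A, A \in S & p \in pairset A.
  move=> [u v]; rewrite inE /= => /andP [/andP [_ nu] /andP [_ nv]].
  pose W := <<col_mx u v>>%MS.
  have rW : \rank W = 2%N.
    rewrite mxrank_gen -addsmxE.
    have r1 : (\rank u < \rank (u + v)%MS)%N.
      by apply: rank_ltmx; rewrite ltmxE addsmxSl /= addsmx_sub negb_and nv orbT.
    have r2 : (\rank (u + v)%MS <= \rank u + \rank v)%N.
      by case: (mxrank_adds_leqif u v).
    move: r1 r2; rewrite !rank_rV nu; case: (v != 0) => /= ? ?; lia.
  have := hC W; rewrite /is_subspace genmx_id eqxx rW /= => /existsP [A /andP [HA WA]].
  exists A => //; rewrite inE /= nu nv andbT /= !andbT.
  have hu : (u <= W)%MS by rewrite genmxE -addsmxE addsmxSl.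
  have hv : (v <= W)%MS by rewrite genmxE -addsmxE addsmxSr.
  by rewrite (submx_trans hu WA) (submx_trans hv WA).
apply: (@leq_trans (\sum_(p in P) \sum_(A in S) (p \in pairset A : nat))).
  rewrite -sum1_card; apply: leq_sum => p hp.
  have [A HA pA] := step1 p hp.
  by rewrite (bigD1 A) //= pA /= add1n.
rewrite exchange_big /= -sum_nat_const; apply: leq_sum => A HA.
have /andP [_ /eqP rA] := hS A HA.
rewrite -rA -card_pairset.
apply: (@leq_trans (\sum_p (p \in pairset A : nat))).
  by rewrite [X in (_ <= X)%N](bigID (fun p => p \in P)) /= leq_addr.
rewrite -sum1_card; apply: eq_leq; rewrite [RHS]big_mkcond; apply: eq_bigr => p _ /=.
by case: (p \in pairset A).
Qed.

Lemma gauss2 n : gauss 2 n 2 = ((2 ^ n)%N%:R - 1) * ((2 ^ (n - 1))%N%:R - 1) / 3.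
Proof.
rewrite /gauss !big_ord_recl !big_ord0 /= subn0 !mulr1.
have -> : ((2 ^ (2 - 0))%N%:R - 1 : rat) = 3 by [].
done.
Qed.

Lemma part1 k : (3 <= k)%N ->
  Num.ceil (gauss 2 (2 * k) 2 / gauss 2 k 2) = ((2 ^ (2 * k) + 3 * 2 ^ k + 5)%N)%:Z.
Proof.
move=> hk.
case: k hk => [//|j] hk.
set y := (2 ^ j)%N.
have hy : (4 <= y)%N by apply: (@leq_pexp2l 2 2 j) => //; lia.
have e1 : (2 ^ j.+1 = 2 * y)%N by rewrite expnS.
have e2 : (2 ^ (2 * j.+1) = 4 * (y * y))%N.
  rewrite (_ : (2 * j.+1 = 2 + (j + j))%N); last by lia.
  by rewrite !expnD.
have e3 : (2 ^ (2 * j.+1 - 1) = 2 * (y * y))%N.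
  rewrite (_ : (2 * j.+1 - 1 = 1 + (j + j))%N); last by lia.
  by rewrite !expnD.
rewrite !gauss2 e2 e3 e1 /= subn1 /= -/y.
apply: ceil_def.
have pz : forall n : nat, ((n%:Z)%:~R : rat) = n%:R by [].
rewrite intrB !pz !natrD !natrM.
have hY : 4 <= (y%:R : rat) by rewrite ler_nat.
move: hY; move: (y%:R : rat) => Y hY; clear e1 e2 e3 hy hk pz.
rewrite [X in _ < X <= _](_ : _ = (4 * Y * Y + 6 * Y + 4) + 3 / (Y - 1)); last first.
  field; apply/andP; split.
  - by rewrite subr_eq0; apply/eqP => h; lra.
  - by rewrite subr_eq0; apply/eqP => h; lra.
have h3 : 0 < 3 / (Y - 1) by apply: divr_gt0; lra.
have h4 : 3 / (Y - 1) <= 1 by rewrite ler_pdivrMr; lra.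
apply/andP; split; lra.
Qed.

Lemma upper k : (1 < k)%N ->
  (covering_number 'F_2 (2 * k) k 2 <= 2 ^ (2 * k) + 6 * 2 ^ k)%N.
Proof.
move=> k2.
have [GM [hGM HGM]] := graph_family k.
have -> : (2 * k = k + k)%N by lia.
apply: (leq_trans (cover_bound (Fam := Fam1 GM :|: Fam2 k2) _ _ _)).
- exact: leq_addr.
- move=> A; rewrite inE => /orP [] /imsetP [p _ ->]; rewrite mxrank_gen; exact: rank_leq_row.
- move=> w1 w2; exact: (pair_cover k2 HGM w1 w2).
apply: (leq_trans (leq_card_setU _ _)).
apply: leq_add.
  by apply: (leq_trans (leq_imset_card _ _)); apply: (leq_trans hGM); rewrite mul2n addnn.
apply: (leq_trans (leq_imset_card _ _)).
rewrite !card_prod card_mx !card_ord mul1n. have -> : (Zp_trunc (pdiv 2)).+2 = 2%N by []. lia.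
Qed.

Lemma low_aux (z s : nat) : ((z*z+16*z+63)*(z*z+16*z+62) <= s * ((z+7)*(z+6)) -> z*z+19*z+93 <= s)%N.
Proof. move=> h.
rewrite leqNgt; apply/negP => hs.
have : (s * ((z+7)*(z+6)) <= (z*z+19*z+92)*((z+7)*(z+6)))%N by apply: leq_mul => //; lia.
nia.
Qed.

Lemma lower k : (3 <= k)%N ->
  (2 ^ (2 * k) + 3 * 2 ^ k + 5 <= covering_number 'F_2 (2 * k) k 2)%N.
Proof.
move=> hk.
have e2 : (2 ^ (2 * k) = 2 ^ k * 2 ^ k)%N by rewrite mul2n -addnn expnD.
have h8 : (8 <= 2 ^ k)%N by apply: (@leq_pexp2l 2 3 k).
have [z hz] : exists z, (2 ^ k = z + 8)%N by exists (2 ^ k - 8)%N; lia.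
rewrite /covering_number; apply: le_bigmin_nat.
  apply: (leq_trans _ (leq_card _ (@set1_inj _))).
  rewrite card_mx card_Fp //.
  apply: (@leq_trans (2 ^ (2 + 2 * k))).
    rewrite e2 expnD e2 hz; nia.
  by apply: leq_pexp2l => //; nia.
move=> S HS.
have := cover_lower HS; rewrite card_Fp // e2 hz.
have -> : ((z + 8) * (z + 8) - 1 = z*z+16*z+63)%N by nia.
have -> : ((z + 8) * (z + 8) - 2 = z*z+16*z+62)%N by nia.
have -> : (z + 8 - 1 = z + 7)%N by lia.
have -> : (z + 8 - 2 = z + 6)%N by lia.
move/low_aux; nia.
Qed.

Theorem mainTheorem8 :
  (forall k : nat, (3 <= k)%N ->
     Num.ceil (gauss 2 (2 * k) 2 / gauss 2 k 2)
       = ((2 ^ (2 * k) + 3 * 2 ^ k + 5)%N)%:Z) /\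
  (forall eps : rat, 0 < eps ->
     exists K : nat, forall k : nat, (K <= k)%N ->
       `| (covering_number 'F_2 (2 * k) k 2)%:R
            / (Num.ceil (gauss 2 (2 * k) 2 / gauss 2 k 2))%:~R - 1 | < eps).
Proof.
split; first exact: part1.
move=> eps he.
pose K0 := (Num.truncn (3 / eps)).+1.
exists (maxn 3 K0) => k; rewrite geq_max => /andP [hk3 hK].
rewrite part1 //.
have lo := lower hk3.
have up := upper (leq_trans (isT : (1 < 3)%N) hk3).
have e2 : (2 ^ (2 * k) = 2 ^ k * 2 ^ k)%N by rewrite mul2n -addnn expnD.
have hxe : 3 / eps < (2 ^ k)%N%:R.
  apply: (lt_le_trans (truncnS_gt _)); rewrite -/K0 ler_nat.
  apply: (leq_trans hK); exact: ltnW (ltn_expl _ (isT : (1 < 2)%N)).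
move: lo up hxe; rewrite e2.
move: (covering_number _ _ _ _) (2 ^ k)%N => N x lo0 up0 hxe.
have pz : forall n : nat, ((n%:Z)%:~R : rat) = n%:R by [].
rewrite pz.
have lo' : ((x * x + 3 * x + 5)%N%:R <= N%:R :> rat) by rewrite ler_nat lo0.
have up' : (N%:R <= (x * x + 6 * x)%N%:R :> rat) by rewrite ler_nat up0.
move: lo' up'; rewrite !natrD !natrM.
move: (N%:R : rat) (x%:R : rat) hxe => n X hxe lo up.
have Xpos : 0 < X.
  have : 0 < 3 / eps by apply: divr_gt0.
  move=> h; exact: lt_trans h hxe.
have h1 : 3 < X * eps by rewrite -ltr_pdivrMr.
have cpos : 0 < X * X + 3%:R * X + 5%:R by nra.
rewrite ger0_norm; last first.
  rewrite subr_ge0 ler_pdivlMr //; lra.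
rewrite ltrBlDr ltr_pdivrMr //.
have h2 : eps * (X * X) <= eps * (X * X + 3%:R * X + 5%:R).
  by rewrite ler_wpM2l //; [lra | nra].
have h3 : 3 * X < eps * (X * X).
  nra.
nra.
nra.
Qed.
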